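(* Let $A\in\mathbb{R}^{n\times n}$ be nonsingular, $B\in\mathbb{R}^{n\times p}$, $C\in\mathbb{R}^{q\times n}$, and let $X_0=O$. For $k=0,1,2,\dots$ suppose that $A-X_kBB^T$ is nonsingular and that $X_{k+1}$ is the approximate solution computed by EKSM (in the sense described in the context) of the Newton–Kleinman Lyapunov equation $$(A-X_kBB^T)X+X(A-X_kBB^T)^T=-X_kBB^TX_k-C^TC ,$$ i.e. $X_{k+1}=W_{k+1}Y^{(k+1)}W_{k+1}^T$, where the columns of $W_{k+1}$ form an orthonormal basis of $\mathbf{EK}^\square_{m_{k+1}}(A-X_kBB^T,[C^T,X_kB])$ for some $m_{k+1}\ge1$, and $Y^{(k+1)}$ is a square matrix; write $X_{k+1}=S_{k+1}S_{k+1}^T$ when $Y^{(k+1)}$ is symmetric positive semidefinite. Then for every $k\ge0$, $$\mathrm{Range}(X_{k+1})\subseteq \mathbf{EK}^\square_{\bar m_{k+1}}(A,C^T)\quad(\text{equivalently }\mathrm{Range}(S_{k+1})\subseteq \mathbf{EK}^\square_{\bar m_{k+1}}(A,C^T))$$ for some integer $\bar m_{k+1}$ with $\bar m_{k+1}\le \sum_{j=1}^{k+1}m_j+2$.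
   Context: For a nonsingular $M\in\mathbb{R}^{n\times n}$ and $G\in\mathbb{R}^{n\times s}$, the block extended Krylov subspace is $\mathbf{EK}^\square_m(M,G)=\mathrm{Range}([G,M^{-1}G,MG,M^{-2}G,\dots,M^{m-1}G,M^{-m}G])$. ''Solving the Lyapunov equation $MX+XM^T+GG^T=0$ by EKSM'' means computing an approximate solution of the form $VYV^T$, where the columns of $V$ form an orthonormal basis of $\mathbf{EK}^\square_m(M,G)$ for some $m$ and $Y$ is a small square matrix (e.g. obtained by a Galerkin condition). *)

(* Defs.v *)
(* Subspaces of R^n are represented, as in mxalgebra, by
   row spaces; the column space (Range) of X : 'M_(n,k) is the row space of X^T. *)
From HB Require Import structures.
From mathcomp Require Import all_boot all_order all_algebra.
Set Implicit Arguments. Unset Strict Implicit. Unset Printing Implicit Defensive.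
Import Order.TTheory GRing.Theory Num.Theory.
Local Open Scope ring_scope.

Definition Range (R : fieldType) (n k : nat) (X : 'M[R]_(n, k)) : 'M[R]_(k, n) := X^T.

Definition EK (R : fieldType) (n s : nat) (m : nat) (M : 'M[R]_n) (G : 'M[R]_(n, s))
  : 'M[R]_n :=
  (\sum_(i < m) (<< Range (M ^+ i *m G) >> + << Range (invmx M ^+ i.+1 *m G) >>))%MS.

Definition orthonormal_basis (R : fieldType) (n r : nat) (W : 'M[R]_(n, r)) (S : 'M[R]_n)
  : Prop :=
  W^T *m W = 1%:M /\ (Range W == S)%MS.

(* Main.v *)
Require Import Defs.
From HB Require Import structures.
From mathcomp Require Import all_boot all_order all_algebra.
Import GRing.Theory Num.Theory.
Local Open Scope ring_scope.

Section Aux.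
Set Implicit Arguments. Unset Strict Implicit.
Variables (R : fieldType) (n : nat).
Implicit Types (N A K E : 'M[R]_n).

Lemma trD A K : (A + K)^T = A^T + K^T.
Proof. by apply/matrixP => i j; rewrite !mxE. Qed.
Lemma trN A : (- A)^T = - A^T.
Proof. by apply/matrixP => i j; rewrite !mxE. Qed.

Lemma powS N s (G : 'M[R]_(n, s)) i : N ^+ i.+1 *m G = N *m (N ^+ i *m G).
Proof. by rewrite exprS mulmxA. Qed.

Lemma genM m (X : 'M[R]_(m, n)) N (T : 'M[R]_n) :
  (X *m N <= T)%MS -> (<<X>> *m N <= T)%MS.
Proof. by rewrite (eqmxMr N (genmxE X)). Qed.

Lemma mono_f (f : nat -> 'M[R]_n) : (forall j, (f j <= f j.+1)%MS) ->
  forall i j, (i <= j)%N -> (f i <= f j)%MS.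
Proof.
move=> Hf i j /subnK <-; elim: (j - i)%N => //= d IH.
rewrite addSn; exact: submx_trans IH (Hf _).
Qed.

Lemma pow_gen s (N : 'M[R]_n) (G : 'M[R]_(n, s)) (f : nat -> 'M[R]_n) :
  (forall j, (f j *m N^T <= f j.+1)%MS) -> (Range G <= f 0%N)%MS ->
  forall i, (Range (N ^+ i *m G) <= f i)%MS.
Proof.
move=> HN H0; elim => [|i IH]; first by rewrite expr0 mul1mx.
rewrite powS /Range trmx_mul; exact: submx_trans (submxMr _ IH) (HN i).
Qed.

Lemma EK_gen s (K : 'M[R]_n) (G : 'M[R]_(n, s)) (f : nat -> 'M[R]_n) :
  (forall j, (f j <= f j.+1)%MS) ->
  (forall j, (f j *m K^T <= f j.+1)%MS) ->
  (forall j, (f j *m (invmx K)^T <= f j.+1)%MS) ->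
  (Range G <= f 0%N)%MS -> forall m, (EK m K G <= f m)%MS.
Proof.
move=> Hf HK HiK H0 m; apply/sumsmx_subP => i _.
rewrite addsmx_sub !genmxE; apply/andP; split.
  exact: submx_trans (pow_gen HK H0 i) (mono_f Hf (ltnW (ltn_ord i))).
exact: submx_trans (pow_gen HiK H0 i.+1) (mono_f Hf (ltn_ord i)).
Qed.

Lemma EK_S s M N (G : 'M[R]_(n, s)) : (EK M N G <= EK M.+1 N G)%MS.
Proof. by rewrite /EK big_ord_recr /=; exact: addsmxSl. Qed.

Lemma T1 s M N (G : 'M[R]_(n, s)) j : (j < M)%N ->
  (Range (N ^+ j *m G) <= EK M N G)%MS.
Proof.
move=> hj; rewrite /EK; apply: (sumsmx_sup (Ordinal hj)) => //=.
apply: submx_trans (addsmxSl _ _); by rewrite genmxE.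
Qed.

Lemma T2 s M N (G : 'M[R]_(n, s)) j : (j < M)%N ->
  (Range (invmx N ^+ j.+1 *m G) <= EK M N G)%MS.
Proof.
move=> hj; rewrite /EK; apply: (sumsmx_sup (Ordinal hj)) => //=.
apply: submx_trans (addsmxSr _ _); by rewrite genmxE.
Qed.

Lemma cancel1 s A (G : 'M[R]_(n, s)) i : A \in unitmx ->
  A *m (invmx A ^+ i.+1 *m G) = invmx A ^+ i *m G.
Proof. by move=> uA; rewrite powS mulmxA mulmxV // mul1mx. Qed.
Lemma cancel2 s A (G : 'M[R]_(n, s)) i : A \in unitmx ->
  invmx A *m (A ^+ i.+1 *m G) = A ^+ i *m G.
Proof. by move=> uA; rewrite powS !mulmxA mulVmx // mul1mx. Qed.

Lemma EK_A s M A (G : 'M[R]_(n, s)) : A \in unitmx ->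
  (EK M A G *m A^T <= EK M.+1 A G)%MS /\
  (EK M A G *m (invmx A)^T <= EK M.+1 A G)%MS.
Proof.
move=> uA; rewrite /EK !sumsmxMr; split; apply/sumsmx_subP => i _;
  rewrite addsmxMr addsmx_sub; apply/andP; split; apply: genM.
- rewrite /Range -trmx_mul -powS; apply: T1; by rewrite ltnS.
- rewrite /Range -trmx_mul cancel1 //.
  case: (nat_of_ord i) (ltn_ord i) => [|j] hj; first by rewrite expr0; have := T1 A G (ltn0Sn M); rewrite expr0.
  apply: T2; rewrite ltnS; exact: ltnW (ltnW hj).
- rewrite /Range -trmx_mul.
  case: (nat_of_ord i) (ltn_ord i) => [|j] hj.
    by rewrite expr0 mul1mx; have := T2 A G (ltn0Sn M); rewrite expr1.
  rewrite cancel2 //; apply: T1; rewrite ltnS; exact: ltnW (ltnW hj).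
- rewrite /Range -trmx_mul -powS; apply: T2; by rewrite ltnS.
Qed.

Lemma inv_id A E : A \in unitmx -> (A - E) \in unitmx ->
  invmx (A - E) = invmx A + invmx A *m E *m invmx (A - E).
Proof.
move=> uA uK.
have h1 : invmx (A - E) = invmx A *m ((A - E) + E) *m invmx (A - E).
  by rewrite subrK mulVmx // mul1mx.
rewrite {1}h1 mulmxDr mulmxDl -(mulmxA (invmx A) (A - E)) mulmxV // mulmx1.
by [].
Qed.

Lemma Kbound p q A (B : 'M[R]_(n,p)) (Ct : 'M[R]_(n,q)) X M0 mk :
  A \in unitmx -> (A - X *m B *m B^T) \in unitmx -> (0 < M0)%N ->
  (X^T <= EK M0 A Ct)%MS ->
  (EK mk (A - X *m B *m B^T) (row_mx Ct (X *m B)) <= EK (mk + M0) A Ct)%MS.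
Proof.
move=> uA uK M0pos HX.
pose f := fun j => EK (j + M0) A Ct.
have Hf j : (f j <= f j.+1)%MS by exact: EK_S.
have HXf j : (X^T <= f j)%MS by exact: submx_trans HX (mono_f Hf (leq0n j)).
have HE m (Z : 'M[R]_(m, n)) : (Z *m (X *m B *m B^T)^T <= X^T)%MS.
  by rewrite -mulmxA trmx_mul mulmxA; exact: submxMl.
have HA j := EK_A (j + M0) Ct uA.
apply: (EK_gen (f := f)).
- exact: Hf.
- move=> j; rewrite trD trN mulmxDr addmx_sub //; first exact: (HA j).1.
  by rewrite mulmxN eqmx_opp; exact: submx_trans (HE _ _) (HXf j.+1).
- move=> j; rewrite inv_id // trD mulmxDr addmx_sub //; first exact: (HA j).2.
  rewrite trmx_mul (trmx_mul (invmx A)) !mulmxA; apply: submx_trans (submxMr _ (HE _ _)) _.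
  exact: submx_trans (submxMr _ (HXf j)) (HA j).2.
- rewrite /Range tr_row_mx col_mx_sub; apply/andP; split.
    by have := T1 A Ct M0pos; rewrite expr0 mul1mx.
  by rewrite trmx_mul; exact: submx_trans (submxMl _ _) (HXf 0%N).
Qed.

End Aux.
Theorem theorem1 (R : realFieldType) (n p q : nat)
  (A : 'M[R]_n) (B : 'M[R]_(n, p)) (C : 'M[R]_(q, n))
  (X : nat -> 'M[R]_n) (m : nat -> nat) (r : nat -> nat)
  (W : forall k, 'M[R]_(n, r k)) (Y : forall k, 'M[R]_(r k)) :
  A \in unitmx ->
  X 0%N = 0 ->
  (forall k, (A - X k *m B *m B^T) \in unitmx) ->
  (forall k, (1 <= m k)%N) ->
  (forall k, orthonormal_basis (W k)
               (EK (m k) (A - X k *m B *m B^T) (row_mx C^T (X k *m B)))) ->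
  (forall k, X k.+1 = W k *m Y k *m (W k)^T) ->
  forall k : nat, exists mbar : nat,
    (mbar <= \sum_(j < k.+1) m j + 2)%N /\
    (Range (X k.+1) <= EK mbar A C^T)%MS.
Proof.
move=> uA H0 uK _ HW HX.
have P : forall k, ((X k)^T <= EK (\sum_(j < k) m j + 1) A C^T)%MS.
  elim => [|k IH]; first by rewrite H0 trmx0 sub0mx.
  have sub1 : ((X k.+1)^T <= Range (W k))%MS.
    by rewrite HX /Range trmx_mul trmxK trmx_mul mulmxA; exact: submxMl.
  case: (HW k) => _ /eqmxP eqW.
  rewrite eqW in sub1.
  apply: submx_trans sub1 _.
  have := Kbound (m k) uA (uK k) (ltn_addl _ (ltn0Sn 0)) IH.
  by rewrite big_ord_recr /= addnA [(m k + _)%N]addnC.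
move=> k; exists (\sum_(j < k.+1) m j + 1)%N; split; last exact: P.
by rewrite leq_add2l.
Qed.
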